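(* For every integer $n>24$, the generalized Petersen graph $GP(n,4)$ is not $1$-distance-balanced.
   Context: For a connected graph $G$ and $x,y\in V(G)$, $d_G(x,y)$ denotes the distance. Let $W_{xy}=\{w\in V(G): d_G(w,x)<d_G(w,y)\}$. $G$ is called $\ell$-distance-balanced if $|W_{xy}|=|W_{yx}|$ for every pair $x,y\in V(G)$ with $d_G(x,y)=\ell$. For integers $n\ge 3$ and $1\le k<n/2$, the generalized Petersen graph $GP(n,k)$ has vertex set $\{u_i: i\in\mathbb{Z}_n\}\cup\{v_i: i\in\mathbb{Z}_n\}$ and edge set $\{u_iu_{i+1}: i\in\mathbb{Z}_n\}\cup\{v_iv_{i+k}: i\in\mathbb{Z}_n\}\cup\{u_iv_i: i\in\mathbb{Z}_n\}$. *)

(* Defs.v *)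
From mathcomp Require Import all_boot.
Set Implicit Arguments. Unset Strict Implicit. Unset Printing Implicit Defensive.

Section Graph.
Variable T : finType.
Variable e : rel T.

Definition walk_of_len (x y : T) (k : nat) : bool :=
  [exists p : k.-tuple T, path e x p && (last x p == y)].

(* graph distance: least k with a walk of length k from x to y
   (a shortest walk has length < #|T|; value #|T| if unreachable) *)
Definition gdist (x y : T) : nat :=
  find (walk_of_len x y) (iota 0 #|T|).

Definition Wset (x y : T) : {set T} := [set w | gdist w x < gdist w y].

Definition dist_balanced (l : nat) : Prop :=
  forall x y : T, gdist x y = l -> #|Wset x y| = #|Wset y x|.

End Graph.

(* Generalized Petersen graph GP(n,k): vertices (false,i) = u_i, (true,i) = v_i *)
Definition GPV (n : nat) : finType := (bool * 'I_n)%type.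

Definition gp_adj (n k : nat) : rel (GPV n) := fun x y =>
  match x, y with
  | (false, i), (false, j) => (val j == (val i + 1) %% n) || (val i == (val j + 1) %% n)
  | (true, i), (true, j) => (val j == (val i + k) %% n) || (val i == (val j + k) %% n)
  | _, (_, j) => val x.2 == val j
  end.
Arguments gp_adj n k : clear implicits.

(* Main.v *)
Require Import Defs.
From mathcomp Require Import all_boot zify.
Set Implicit Arguments. Unset Strict Implicit. Unset Printing Implicit Defensive.

Section Dist.
Variables (T : finType) (e : rel T) (s : T) (D : T -> nat).
Hypotheses (Hlip : forall a b, e a b -> D a <= (D b).+1) (Hs : D s = 0)
  (H0 : forall a, D a = 0 -> a = s)
  (Hdesc : forall a, 0 < D a -> exists b, e a b && (D b == (D a).-1))
  (Hbd : forall a, D a < #|T|).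

Lemma path_lb (p : seq T) a : path e a p -> D a <= size p + D (last a p).
Proof.
elim: p a => [|b p IH] a /=; first by rewrite add0n.
case/andP=> hab hp; have := IH b hp; have := Hlip hab; lia.
Qed.

Lemma walk_lb k a : walk_of_len e a s k -> D a <= k.
Proof.
case/existsP => p /andP [hp /eqP hl]; have := path_lb hp.
by rewrite hl Hs size_tuple addn0.
Qed.

Lemma path_ub m : forall a, D a = m ->
  exists p : seq T, [/\ size p = m, path e a p & last a p = s].
Proof.
elim: m => [|m IH] a Ha.
  by exists [::]; split => //=; rewrite (H0 Ha).
have hpos : 0 < D a by rewrite Ha.
have [b /andP [hab /eqP hb]] := Hdesc hpos.
rewrite Ha /= in hb; have [p [h1 h2 h3]] := IH b hb.
by exists (b :: p); split => /=; rewrite ?h1 ?hab ?h2.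
Qed.

Lemma walk_ub a : walk_of_len e a s (D a).
Proof.
have [p [h1 h2 h3]] := path_ub (erefl (D a)).
apply/existsP; have hs : size p == D a by rewrite h1.
by exists (Tuple hs) => /=; rewrite h2 h3 eqxx.
Qed.

Lemma gdistE a : gdist e a s = D a.
Proof.
rewrite /gdist; set P := walk_of_len e a s; set N := #|T|.
have hP : P (D a) := walk_ub a.
have hlt := Hbd a.
have hhas : has P (iota 0 N).
  by apply/hasP; exists (D a) => //; rewrite mem_iota /= add0n.
have hf := nth_find 0 hhas.
have hfs := hhas; rewrite has_find size_iota in hfs.
case: (ltngtP (find P (iota 0 N)) (D a)) => // h.
- rewrite nth_iota // add0n in hf; have := walk_lb hf; lia.
- have := before_find 0 h; rewrite nth_iota // add0n.
  by rewrite hP.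
Qed.
End Dist.
Definition A j := j %/ 4 + minn (j %% 4) 2.
Definition FU (b:bool) j := if b then A j + 1 else minn j (A j + 2).
Definition FV (b:bool) j := if b then A j + 2 * minn (j %% 4) 1 else A j + 1.
Definition DU n b i := minn (FU b i) (FU b (n - i)).
Definition DV n b i := minn (FV b i) (FV b (n - i)).
Arguments DU : simpl never.
Arguments DV : simpl never.
Lemma minlip a b a' b' : a <= a'.+1 -> a' <= a.+1 -> b <= b'.+1 -> b' <= b.+1 ->
  minn a b <= (minn a' b').+1 /\ minn a' b' <= (minn a b).+1.
Proof. lia. Qed.
Lemma FU0_1 x : FU false x <= (FU false x.+1).+1 /\ FU false x.+1 <= (FU false x).+1.
Proof. rewrite /FU /A; lia. Qed.
Lemma FV0_1 x : FV false x <= (FV false x.+1).+1 /\ FV false x.+1 <= (FV false x).+1.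
Proof. rewrite /FV /A; lia. Qed.

Lemma uu_gen (F : nat -> nat) n i j :
  (forall x, F x <= (F x.+1).+1 /\ F x.+1 <= (F x).+1) ->
  i < n -> ((i.+1<n /\ j = i.+1) \/ (i.+1 = n /\ j = 0)) ->
  minn (F i) (F (n - i)) <= (minn (F j) (F (n - j))).+1 /\
  minn (F j) (F (n - j)) <= (minn (F i) (F (n - i))).+1.
Proof.
move=> HF hi [[h ->]|[h ->]].
- have e : n - i = (n - i.+1).+1 by lia.
  rewrite e; have [a1 a2] := HF i; have [b1 b2] := HF (n - i.+1).
  by apply: minlip.
- have e1 : n - i = 1 by lia.
  have e2 : n - 0 = i.+1 by lia.
  rewrite e1 e2 (minnC (F 0)); have [a1 a2] := HF i; have [b1 b2] := HF 0.
  by apply: minlip.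
Qed.

Lemma uuU n i j : 24 < n -> i < n -> j < n -> ((i.+1<n /\ j = i.+1) \/ (i.+1 = n /\ j = 0)) ->
  DU n false i <= (DU n false j).+1 /\ DU n false j <= (DU n false i).+1.
Proof. move=> _ hi _ hs; exact: (uu_gen (F := FU false) FU0_1 hi hs). Qed.
Lemma uuV n i j : 24 < n -> i < n -> j < n -> ((i.+1<n /\ j = i.+1) \/ (i.+1 = n /\ j = 0)) ->
  DV n false i <= (DV n false j).+1 /\ DV n false j <= (DV n false i).+1.
Proof. move=> _ hi _ hs; exact: (uu_gen (F := FV false) FV0_1 hi hs). Qed.
Lemma vv_gen (F : nat -> nat) n i j :
  (forall x, F x <= (F (x + 4)).+1 /\ F (x + 4) <= (F x).+1) ->
  (forall a, a <= 4 -> F a <= (F (4 - a)).+1) ->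
  (forall x y, x <= 4 -> 20 <= y -> F x <= F y) ->
  24 < n -> i < n -> ((i+4<n /\ j = i+4) \/ (n <= i+4 /\ j = i+4-n)) ->
  minn (F i) (F (n - i)) <= (minn (F j) (F (n - j))).+1 /\
  minn (F j) (F (n - j)) <= (minn (F i) (F (n - i))).+1.
Proof.
move=> H4 Hc Hs hn hi [[h ->]|[h ->]].
- have e : n - i = (n - (i + 4)) + 4 by lia.
  rewrite e; have [a1 a2] := H4 i; have [b1 b2] := H4 (n - (i + 4)).
  by apply: minlip.
- have e1 : minn (F i) (F (n - i)) = F (n - i).
    by apply/minn_idPr; apply: Hs; lia.
  have e2 : minn (F (i + 4 - n)) (F (n - (i + 4 - n))) = F (i + 4 - n).
    by apply/minn_idPl; apply: Hs; lia.
  rewrite e1 e2.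
  have ea : i + 4 - n = 4 - (n - i) by lia.
  have eb : n - i = 4 - (i + 4 - n) by lia.
  split.
  + rewrite ea; apply: Hc; lia.
  + rewrite eb; apply: Hc; lia.
Qed.
Lemma FU1_4 x : FU true x <= (FU true (x + 4)).+1 /\ FU true (x + 4) <= (FU true x).+1.
Proof. rewrite /FU /A; lia. Qed.
Lemma FV1_4 x : FV true x <= (FV true (x + 4)).+1 /\ FV true (x + 4) <= (FV true x).+1.
Proof. rewrite /FV /A; lia. Qed.
Lemma FU1_c a : a <= 4 -> FU true a <= (FU true (4 - a)).+1.
Proof. rewrite /FU /A; lia. Qed.
Lemma FV1_c a : a <= 4 -> FV true a <= (FV true (4 - a)).+1.
Proof. rewrite /FV /A; lia. Qed.
Lemma FU1_s x y : x <= 4 -> 20 <= y -> FU true x <= FU true y.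
Proof. rewrite /FU /A; lia. Qed.
Lemma FV1_s x y : x <= 4 -> 20 <= y -> FV true x <= FV true y.
Proof. rewrite /FV /A; lia. Qed.
Lemma vvU n i j : 24 < n -> i < n -> j < n -> ((i+4<n /\ j = i+4) \/ (n <= i+4 /\ j = i+4-n)) ->
  DU n true i <= (DU n true j).+1 /\ DU n true j <= (DU n true i).+1.
Proof. move=> hn hi _ hs; exact: (vv_gen (F := FU true) FU1_4 FU1_c FU1_s hn hi hs). Qed.
Lemma vvV n i j : 24 < n -> i < n -> j < n -> ((i+4<n /\ j = i+4) \/ (n <= i+4 /\ j = i+4-n)) ->
  DV n true i <= (DV n true j).+1 /\ DV n true j <= (DV n true i).+1.
Proof. move=> hn hi _ hs; exact: (vv_gen (F := FV true) FV1_4 FV1_c FV1_s hn hi hs). Qed.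
Lemma uvU n i : 24 < n -> i < n -> 
  DU n true i <= (DU n false i).+1 /\ DU n false i <= (DU n true i).+1.
Proof. rewrite /DU /FU /A. lia. Qed.

Lemma pick (Dk Di Fy : nat) : Di <= Dk.+1 -> Dk <= Fy -> Fy.+1 = Di -> Dk = Di.-1.
Proof. lia. Qed.
Lemma DlL n b i : DU n b i <= FU b i. Proof. exact: geq_minl. Qed.
Lemma DlR n b i : DU n b i <= FU b (n - i). Proof. exact: geq_minr. Qed.

Lemma descUu n i k1 k2 : 24 < n -> i < n -> 0 < DU n false i ->
  ((i.+1<n /\ k1 = i.+1) \/ (i.+1 = n /\ k1 = 0)) ->
  ((0 < i /\ k2 = i.-1) \/ (i = 0 /\ k2 = n.-1)) ->
  DU n false k1 = (DU n false i).-1 \/ DU n false k2 = (DU n false i).-1 \/ DU n true i = (DU n false i).-1.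
Proof.
move=> hn hi hp hk1 hk2.
have hk1n : k1 < n by lia.
have hk2n : k2 < n by lia.
case: (leqP (FU false i) (FU false (n - i))) => hL.
- have eD : DU n false i = FU false i by rewrite /DU; apply/minn_idPl.
  rewrite eD in hp *.
  case: (leqP i 3) => hs.
  + right; left; apply: (pick (Fy := FU false k2)).
    * rewrite -eD; have := uuU hn hk2n hi (ltac:(lia)); lia.
    * exact: DlL.
    * rewrite /FU /A in hp *; lia.
  + right; right; apply: (pick (Fy := FU true i)).
    * rewrite -eD; have := uvU hn hi; lia.
    * exact: DlL.
    * rewrite /FU /A in hp *; lia.
- have eD : DU n false i = FU false (n - i) by rewrite /DU; apply/minn_idPr/ltnW.
  rewrite eD in hp *.
  case: (leqP (n - i) 3) => hs.
  + left; case: hk1 => [[h1 e1]|[h1 e1]].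
    * apply: (pick (Fy := FU false (n - k1))).
      - rewrite -eD; have := uuU hn hi hk1n (ltac:(lia)); lia.
      - exact: DlR.
      - rewrite /FU /A in hp *; lia.
    * apply: (pick (Fy := FU false k1)).
      - rewrite -eD; have := uuU hn hi hk1n (ltac:(lia)); lia.
      - exact: DlL.
      - rewrite /FU /A in hp *; lia.
  + right; right; apply: (pick (Fy := FU true (n - i))).
    * rewrite -eD; have := uvU hn hi; lia.
    * exact: DlR.
    * rewrite /FU /A in hp *; lia.
Qed.

Lemma descUv n i k1 k2 : 24 < n -> i < n -> 0 < DU n true i ->
  ((i+4<n /\ k1 = i+4) \/ (n <= i+4 /\ k1 = i+4-n)) ->
  ((4 <= i /\ k2 = i-4) \/ (i < 4 /\ k2 = i+n-4)) ->
  DU n true k1 = (DU n true i).-1 \/ DU n true k2 = (DU n true i).-1 \/ DU n false i = (DU n true i).-1.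
Proof.
move=> hn hi hp hk1 hk2.
have hk1n : k1 < n by lia.
have hk2n : k2 < n by lia.
have L1 := vvU hn hi hk1n hk1.
have L2 : DU n true k2 <= (DU n true i).+1 /\ DU n true i <= (DU n true k2).+1.
  have := vvU hn hk2n hi (ltac:(lia)); lia.
have L3 := uvU hn hi.
case: (leqP (FU true i) (FU true (n - i))) => hL.
- have eD : DU n true i = FU true i by rewrite /DU; apply/minn_idPl.
  rewrite eD in hp L1 L2 L3 *.
  have : i = 0 \/ (1 <= i <= 2) \/ i = 3 \/ 4 <= i by lia.
  case=> [hs|[hs|[hs|hs]]].
  + right; right; apply: (pick (Fy := FU false i)); first lia; first exact: DlL.
    rewrite /FU /A in hp hL *; lia.
  + right; right; apply: (pick (Fy := FU false i)); first lia; first exact: DlL.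
    rewrite /FU /A in hp hL *; lia.
  + right; left; apply: (pick (Fy := FU true (n - k2))); first lia; first exact: DlR.
    rewrite /FU /A in hp hL *; lia.
  + right; left; apply: (pick (Fy := FU true k2)); first lia; first exact: DlL.
    rewrite /FU /A in hp hL *; lia.
- have eD : DU n true i = FU true (n - i) by rewrite /DU; apply/minn_idPr/ltnW.
  rewrite eD in hp L1 L2 L3 *.
  have : n - i = 4 \/ 4 < n - i \/ (1 <= n - i <= 2) \/ n - i = 3 by lia.
  case=> [hs|[hs|[hs|hs]]].
  + left; apply: (pick (Fy := FU true k1)); first lia; first exact: DlL.
    rewrite /FU /A in hp hL *; lia.
  + left; apply: (pick (Fy := FU true (n - k1))); first lia; first exact: DlR.
    rewrite /FU /A in hp hL *; lia.
  + right; right; apply: (pick (Fy := FU false (n - i))); first lia; first exact: DlR.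
    rewrite /FU /A in hp hL *; lia.
  + left; apply: (pick (Fy := FU true k1)); first lia; first exact: DlL.
    rewrite /FU /A in hp hL *; lia.
Qed.
Lemma VlL n b i : DV n b i <= FV b i. Proof. exact: geq_minl. Qed.
Lemma VlR n b i : DV n b i <= FV b (n - i). Proof. exact: geq_minr. Qed.
Lemma uvV n i : 24 < n -> i < n -> 
  DV n true i <= (DV n false i).+1 /\ DV n false i <= (DV n true i).+1.
Proof. rewrite /DV /FV /A. lia. Qed.

Lemma descVu n i k1 k2 : 24 < n -> i < n -> 0 < DV n false i ->
  ((i.+1<n /\ k1 = i.+1) \/ (i.+1 = n /\ k1 = 0)) ->
  ((0 < i /\ k2 = i.-1) \/ (i = 0 /\ k2 = n.-1)) ->
  DV n false k1 = (DV n false i).-1 \/ DV n false k2 = (DV n false i).-1 \/ DV n true i = (DV n false i).-1.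
Proof.
move=> hn hi hp hk1 hk2.
have hk1n : k1 < n by lia.
have hk2n : k2 < n by lia.
have L1 := uuV hn hi hk1n hk1.
have L2 : DV n false k2 <= (DV n false i).+1 /\ DV n false i <= (DV n false k2).+1.
  have := uuV hn hk2n hi (ltac:(lia)); lia.
have L3 := uvV hn hi.
case: (leqP (FV false i) (FV false (n - i))) => hL.
- have eD : DV n false i = FV false i by rewrite /DV; apply/minn_idPl.
  rewrite eD in hp L1 L2 L3 *.
  have : i %% 4 = 0 \/ (1 <= i %% 4 <= 2) \/ i %% 4 = 3 by lia.
  case=> [hs|[hs|hs]].
  + right; right; apply: (pick (Fy := FV true i)); first lia; first exact: VlL.
    rewrite /FV /A in hp hL *; lia.
  + right; left; apply: (pick (Fy := FV false k2)); first lia; first exact: VlL.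
    rewrite /FV /A in hp hL *; lia.
  + left; apply: (pick (Fy := FV false k1)); first lia; first exact: VlL.
    rewrite /FV /A in hp hL *; lia.
- have eD : DV n false i = FV false (n - i) by rewrite /DV; apply/minn_idPr/ltnW.
  rewrite eD in hp L1 L2 L3 *.
  have : (n - i) %% 4 = 0 \/ ((1 <= (n - i) %% 4 <= 2) /\ i.+1 < n) \/ i.+1 = n \/ (n - i) %% 4 = 3 by lia.
  case=> [hs|[hs|[hs|hs]]].
  + right; right; apply: (pick (Fy := FV true (n - i))); first lia; first exact: VlR.
    rewrite /FV /A in hp hL *; lia.
  + left; apply: (pick (Fy := FV false (n - k1))); first lia; first exact: VlR.
    rewrite /FV /A in hp hL *; lia.
  + left; apply: (pick (Fy := FV false k1)); first lia; first exact: VlL.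
    rewrite /FV /A in hp hL *; lia.
  + right; left; apply: (pick (Fy := FV false (n - k2))); first lia; first exact: VlR.
    rewrite /FV /A in hp hL *; lia.
Qed.

Lemma descVv n i k1 k2 : 24 < n -> i < n -> 0 < DV n true i ->
  ((i+4<n /\ k1 = i+4) \/ (n <= i+4 /\ k1 = i+4-n)) ->
  ((4 <= i /\ k2 = i-4) \/ (i < 4 /\ k2 = i+n-4)) ->
  DV n true k1 = (DV n true i).-1 \/ DV n true k2 = (DV n true i).-1 \/ DV n false i = (DV n true i).-1.
Proof.
move=> hn hi hp hk1 hk2.
have hk1n : k1 < n by lia.
have hk2n : k2 < n by lia.
have L1 := vvV hn hi hk1n hk1.
have L2 : DV n true k2 <= (DV n true i).+1 /\ DV n true i <= (DV n true k2).+1.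
  have := vvV hn hk2n hi (ltac:(lia)); lia.
have L3 := uvV hn hi.
case: (leqP (FV true i) (FV true (n - i))) => hL.
- have eD : DV n true i = FV true i by rewrite /DV; apply/minn_idPl.
  rewrite eD in hp L1 L2 L3 *.
  have : i %% 4 = 0 \/ 0 < i %% 4 by lia.
  case=> [hs|hs].
  + right; left; apply: (pick (Fy := FV true k2)); first lia; first exact: VlL.
    rewrite /FV /A in hp hL *; lia.
  + right; right; apply: (pick (Fy := FV false i)); first lia; first exact: VlL.
    rewrite /FV /A in hp hL *; lia.
- have eD : DV n true i = FV true (n - i) by rewrite /DV; apply/minn_idPr/ltnW.
  rewrite eD in hp L1 L2 L3 *.
  have : ((n - i) %% 4 = 0 /\ 4 < n - i) \/ n - i = 4 \/ 0 < (n - i) %% 4 by lia.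
  case=> [hs|[hs|hs]].
  + left; apply: (pick (Fy := FV true (n - k1))); first lia; first exact: VlR.
    rewrite /FV /A in hp hL *; lia.
  + left; apply: (pick (Fy := FV true k1)); first lia; first exact: VlL.
    rewrite /FV /A in hp hL *; lia.
  + right; right; apply: (pick (Fy := FV false (n - i))); first lia; first exact: VlR.
    rewrite /FV /A in hp hL *; lia.
Qed.
Lemma pw_mid n i : 24 < n -> 12 < i -> 12 < n - i -> i < n ->
  (DU n false i < DV n false i) + (DU n true i < DV n true i)
  <= (DV n false i < DU n false i) + (DV n true i < DU n true i).
Proof.
move=> hn h1 h2 hi.
have e1 : DV n false i = DU n true i by [].
have e2 : DU n false i = (DU n true i).+1.
  rewrite /DU /FU /A; lia.
rewrite e1 e2; move: (DU n true i) (DV n true i) => x y; lia.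
Qed.

Lemma neq_lo n i k : 24 < n -> i <= 12 -> 0 < k <= 12 -> (i == n - k) = false.
Proof. lia. Qed.
Lemma neq_hi n t k : 24 < n -> 0 < t <= 12 -> 0 < k <= 12 -> (n - t == k) = false.
Proof. lia. Qed.
Lemma near_lo n i : 24 < n -> i <= 12 ->
  [/\ DU n false i = FU false i, DU n true i = FU true i & DV n false i = FV false i].
Proof.
move=> hn hi; rewrite /DU /DV; split; apply/minn_idPl; rewrite /FU /FV /A; lia.
Qed.
Lemma near_hi n t : 24 < n -> 0 < t <= 12 ->
  [/\ DU n false (n - t) = FU false t, DU n true (n - t) = FU true t & DV n false (n - t) = FV false t].
Proof.
move=> hn hi; have e : n - (n - t) = t by lia.
rewrite /DU /DV e; split; apply/minn_idPr; rewrite /FU /FV /A; lia.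
Qed.

Lemma pw_lo n i : 24 < n -> i <= 12 ->
  (DU n false i < DV n false i) + (DU n true i < DV n true i)
  + 2 * ((i == 4) + (i == 8) + (i == 12) + (i == n - 4) + (i == n - 8) + (i == n - 12))
  <= (DV n false i < DU n false i) + (DV n true i < DU n true i)
  + 2 * ((i == 1) + (i == 2) + (i == n - 1) + (i == n - 2)) + (i == 3) + (i == n - 3).
Proof.
move=> hn hi.
rewrite !(@neq_lo n i) //.
have [-> -> ->] := near_lo hn hi.
have : DV n true i = minn (FV true i) (FV true (n - i)) by [].
move: (DV n true i) => y.
rewrite /FU /FV /A.
have : i = 0 \/ i = 1 \/ i = 2 \/ i = 3 \/ i = 4 \/ i = 5 \/ i = 6 \/ i = 7 \/ i = 8 \/ i = 9 \/ i = 10 \/ i = 11 \/ i = 12 by lia.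
case=> [->|[->|[->|[->|[->|[->|[->|[->|[->|[->|[->|[->|->]]]]]]]]]]]] /= ey; lia.
Qed.
Lemma pw_hi n i : 24 < n -> i < n -> n - i <= 12 ->
  (DU n false i < DV n false i) + (DU n true i < DV n true i)
  + 2 * ((i == 4) + (i == 8) + (i == 12) + (i == n - 4) + (i == n - 8) + (i == n - 12))
  <= (DV n false i < DU n false i) + (DV n true i < DU n true i)
  + 2 * ((i == 1) + (i == 2) + (i == n - 1) + (i == n - 2)) + (i == 3) + (i == n - 3).
Proof.
move=> hn hi ht.
have ei : i = n - (n - i) by lia.
move: (n - i) ei ht hi => t -> ht hi.
have ht0 : 0 < t <= 12 by lia.
have eqs : forall k, k <= n -> (n - t == n - k) = (t == k) by move=> k hk; lia.
rewrite !eqs; try lia.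
rewrite ?(@neq_hi n t 4) ?(@neq_hi n t 8) ?(@neq_hi n t 12) ?(@neq_hi n t 1) ?(@neq_hi n t 2) ?(@neq_hi n t 3) //.
have [-> -> ->] := near_hi hn ht0.
have : DV n true (n - t) = minn (FV true (n - t)) (FV true t).
  by rewrite /DV (_ : n - (n - t) = t) //; lia.
move: (DV n true (n - t)) => y.
rewrite /FU /FV /A.
have : t = 1 \/ t = 2 \/ t = 3 \/ t = 4 \/ t = 5 \/ t = 6 \/ t = 7 \/ t = 8 \/ t = 9 \/ t = 10 \/ t = 11 \/ t = 12 by lia.
case=> [->|[->|[->|[->|[->|[->|[->|[->|[->|[->|[->|->]]]]]]]]]]] /= ey; lia.
Qed.
Lemma zeroU n b i : i < n -> DU n b i = 0 -> b = false /\ i = 0.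
Proof. case: b; rewrite /DU /FU /A; lia. Qed.
Lemma zeroV n b i : i < n -> DV n b i = 0 -> b = true /\ i = 0.
Proof. case: b; rewrite /DV /FV /A; lia. Qed.
Lemma bdU n b i : 24 < n -> i < n -> DU n b i < 2 * n.
Proof. case: b; rewrite /DU /FU /A; lia. Qed.
Lemma bdV n b i : 24 < n -> i < n -> DV n b i < 2 * n.
Proof. case: b; rewrite /DV /FV /A; lia. Qed.

Lemma neq_mid n i k : 12 < i -> 12 < n - i -> 0 < k <= 12 -> (i == k) = false /\ (i == n - k) = false.
Proof. lia. Qed.

Lemma pointwise n i : 24 < n -> i < n ->
  (DU n false i < DV n false i) + (DU n true i < DV n true i)
  + 2 * ((i == 4) + (i == 8) + (i == 12) + (i == n - 4) + (i == n - 8) + (i == n - 12))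
  <= (DV n false i < DU n false i) + (DV n true i < DU n true i)
  + 2 * ((i == 1) + (i == 2) + (i == n - 1) + (i == n - 2)) + (i == 3) + (i == n - 3).
Proof.
move=> hn hi.
case: (leqP i 12) => h1; first exact: pw_lo.
case: (leqP (n - i) 12) => h2; first exact: pw_hi.
have [-> ->] := @neq_mid n i 4 h1 h2 erefl.
have [-> ->] := @neq_mid n i 8 h1 h2 erefl.
have [-> ->] := @neq_mid n i 12 h1 h2 erefl.
have [-> ->] := @neq_mid n i 1 h1 h2 erefl.
have [-> ->] := @neq_mid n i 2 h1 h2 erefl.
have [-> ->] := @neq_mid n i 3 h1 h2 erefl.
have := pw_mid hn h1 h2 hi; rewrite /=; lia.
Qed.

Lemma sum_eq1 n k : k < n -> \sum_(i < n) (i == k :> nat) = 1.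
Proof.
move=> hk; rewrite (bigD1 (Ordinal hk)) //= eqxx big1 // => i hi.
case: eqP => // e; move: hi; suff -> : i = Ordinal hk by rewrite eqxx.
exact: val_inj.
Qed.
Lemma specS n i j : i < n -> j = (i + 1) %% n -> (i.+1 < n /\ j = i.+1) \/ (i.+1 = n /\ j = 0).
Proof.
move=> hi ->; case: (ltnP i.+1 n) => h.
  by left; rewrite addn1 modn_small.
have e : i.+1 = n by lia.
by right; rewrite addn1 e modnn.
Qed.
Lemma spec4 n i j : 4 < n -> i < n -> j = (i + 4) %% n ->
  (i + 4 < n /\ j = i + 4) \/ (n <= i + 4 /\ j = i + 4 - n).
Proof.
move=> hn hi ->; case: (ltnP (i + 4) n) => h.
  by left; rewrite modn_small.
right; split => //; rewrite -{1}(subnK h) modnDr modn_small //; lia.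
Qed.
Lemma specS_inv n i j : ((i.+1 < n /\ j = i.+1) \/ (i.+1 = n /\ j = 0)) -> j = (i + 1) %% n.
Proof.
case=> [[h ->]|[h ->]]; first by rewrite addn1 modn_small.
by rewrite addn1 h modnn.
Qed.
Lemma spec4_inv n i j : 4 < n -> ((i + 4 < n /\ j = i + 4) \/ (n <= i + 4 /\ j = i + 4 - n)) -> i < n ->
  j = (i + 4) %% n.
Proof.
move=> h4; case=> [[h ->]|[h ->]] hi; first by rewrite modn_small.
rewrite -{2}(subnK h) modnDr modn_small //; lia.
Qed.

Section GPn.
Variable n : nat.
Hypothesis hn : 24 < n.
Let h4 : 4 < n. Proof. lia. Qed.

Definition DUv (w : GPV n) := DU n w.1 (val w.2).
Definition DVv (w : GPV n) := DV n w.1 (val w.2).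

Lemma lipU (a b : GPV n) : gp_adj n 4 a b -> DUv a <= (DUv b).+1.
Proof.
case: a b => [[|] [i hi]] [[|] [j hj]]; rewrite /gp_adj /DUv /=.
- case/orP=> /eqP e.
  + have := vvU hn hi hj (spec4 h4 hi e); lia.
  + have := vvU hn hj hi (spec4 h4 hj e); lia.
- move/eqP=> e; subst j; have := uvU hn hi; lia.
- move/eqP=> e; subst j; have := uvU hn hi; lia.
- case/orP=> /eqP e.
  + have := uuU hn hi hj (specS hi e); lia.
  + have := uuU hn hj hi (specS hj e); lia.
Qed.

Lemma lipV (a b : GPV n) : gp_adj n 4 a b -> DVv a <= (DVv b).+1.
Proof.
case: a b => [[|] [i hi]] [[|] [j hj]]; rewrite /gp_adj /DVv /=.
- case/orP=> /eqP e.
  + have := vvV hn hi hj (spec4 h4 hi e); lia.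
  + have := vvV hn hj hi (spec4 h4 hj e); lia.
- move/eqP=> e; subst j; have := uvV hn hi; lia.
- move/eqP=> e; subst j; have := uvV hn hi; lia.
- case/orP=> /eqP e.
  + have := uuV hn hi hj (specS hi e); lia.
  + have := uuV hn hj hi (specS hj e); lia.
Qed.

Lemma nbrs (i : nat) (hi : i < n) (P : pred (GPV n)) :
  (forall k1 k2 (h1 : k1 < n) (h2 : k2 < n),
     ((i+4<n /\ k1 = i+4) \/ (n <= i+4 /\ k1 = i+4-n)) ->
     ((4 <= i /\ k2 = i-4) \/ (i < 4 /\ k2 = i+n-4)) ->
     P (true, Ordinal h1) \/ P (true, Ordinal h2) \/ P (false, Ordinal hi)) ->
  exists b, gp_adj n 4 (true, Ordinal hi) b && P b.
Proof.
move=> H.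
set k1 := if i + 4 < n then i + 4 else i + 4 - n.
set k2 := if 4 <= i then i - 4 else i + n - 4.
have s1 : (i+4<n /\ k1 = i+4) \/ (n <= i+4 /\ k1 = i+4-n) by rewrite /k1; case: ifP => h; lia.
have s2 : (4 <= i /\ k2 = i-4) \/ (i < 4 /\ k2 = i+n-4) by rewrite /k2; case: ifP => h; lia.
have h1 : k1 < n by lia.
have h2 : k2 < n by lia.
have [p|[p|p]] := H k1 k2 h1 h2 s1 s2.
- exists (true, Ordinal h1); rewrite /gp_adj /=.
  rewrite -(spec4_inv h4 s1 hi) eqxx /=; exact: p.
- exists (true, Ordinal h2); rewrite /gp_adj /=.
  have e : i = (k2 + 4) %% n by apply: spec4_inv; lia.
  rewrite -e eqxx orbT /=; exact: p.
- exists (false, Ordinal hi); rewrite /gp_adj /= eqxx /=; exact: p.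
Qed.

Lemma nbrs_u (i : nat) (hi : i < n) (P : pred (GPV n)) :
  (forall k1 k2 (h1 : k1 < n) (h2 : k2 < n),
     ((i.+1<n /\ k1 = i.+1) \/ (i.+1 = n /\ k1 = 0)) ->
     ((0 < i /\ k2 = i.-1) \/ (i = 0 /\ k2 = n.-1)) ->
     P (false, Ordinal h1) \/ P (false, Ordinal h2) \/ P (true, Ordinal hi)) ->
  exists b, gp_adj n 4 (false, Ordinal hi) b && P b.
Proof.
move=> H.
set k1 := if i.+1 < n then i.+1 else 0.
set k2 := if 0 < i then i.-1 else n.-1.
have s1 : (i.+1<n /\ k1 = i.+1) \/ (i.+1 = n /\ k1 = 0) by rewrite /k1; case: ifP => h; lia.
have s2 : (0 < i /\ k2 = i.-1) \/ (i = 0 /\ k2 = n.-1) by rewrite /k2; case: ifP => h; lia.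
have h1 : k1 < n by lia.
have h2 : k2 < n by lia.
have [p|[p|p]] := H k1 k2 h1 h2 s1 s2.
- exists (false, Ordinal h1); rewrite /gp_adj /=.
  rewrite -(specS_inv s1) eqxx /=; exact: p.
- exists (false, Ordinal h2); rewrite /gp_adj /=.
  have e : i = (k2 + 1) %% n by apply: specS_inv; lia.
  rewrite -e eqxx orbT /=; exact: p.
- exists (true, Ordinal hi); rewrite /gp_adj /= eqxx /=; exact: p.
Qed.

Lemma descU (a : GPV n) : 0 < DUv a -> exists b, gp_adj n 4 a b && (DUv b == (DUv a).-1).
Proof.
case: a => [[|] [i hi]] hp.
- apply: (nbrs (hi := hi) (P := fun b => DUv b == (DUv (true, Ordinal hi)).-1)).
  move=> k1 k2 h1 h2 s1 s2; rewrite /= /DUv /=.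
  by case: (descUv hn hi hp s1 s2) => [e|[e|e]]; [left|right; left|right; right]; apply/eqP.
- apply: (nbrs_u (hi := hi) (P := fun b => DUv b == (DUv (false, Ordinal hi)).-1)).
  move=> k1 k2 h1 h2 s1 s2; rewrite /= /DUv /=.
  by case: (descUu hn hi hp s1 s2) => [e|[e|e]]; [left|right; left|right; right]; apply/eqP.
Qed.

Lemma descV (a : GPV n) : 0 < DVv a -> exists b, gp_adj n 4 a b && (DVv b == (DVv a).-1).
Proof.
case: a => [[|] [i hi]] hp.
- apply: (nbrs (hi := hi) (P := fun b => DVv b == (DVv (true, Ordinal hi)).-1)).
  move=> k1 k2 h1 h2 s1 s2; rewrite /= /DVv /=.
  by case: (descVv hn hi hp s1 s2) => [e|[e|e]]; [left|right; left|right; right]; apply/eqP.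
- apply: (nbrs_u (hi := hi) (P := fun b => DVv b == (DVv (false, Ordinal hi)).-1)).
  move=> k1 k2 h1 h2 s1 s2; rewrite /= /DVv /=.
  by case: (descVu hn hi hp s1 s2) => [e|[e|e]]; [left|right; left|right; right]; apply/eqP.
Qed.

Let n0 : 0 < n. Proof. lia. Qed.
Definition u0 : GPV n := (false, Ordinal n0).
Definition v0 : GPV n := (true, Ordinal n0).

Lemma zU a : DUv a = 0 -> a = u0.
Proof.
case: a => b [i hi]; rewrite /DUv /= => h; have [-> e] := zeroU hi h.
by subst i; congr pair; apply: val_inj.
Qed.
Lemma zV a : DVv a = 0 -> a = v0.
Proof.
case: a => b [i hi]; rewrite /DVv /= => h; have [-> e] := zeroV hi h.
by subst i; congr pair; apply: val_inj.
Qed.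

Lemma cardG : #|GPV n| = 2 * n.
Proof. by rewrite /GPV card_prod card_bool card_ord. Qed.

Lemma gU w : gdist (gp_adj n 4) w u0 = DUv w.
Proof.
apply: (gdistE (D := DUv)).
- exact: lipU.
- rewrite /DUv /DU /FU /A /=; lia.
- exact: zU.
- exact: descU.
- by move=> [b [i hi]]; rewrite cardG; exact: bdU.
Qed.
Lemma gV w : gdist (gp_adj n 4) w v0 = DVv w.
Proof.
apply: (gdistE (D := DVv)).
- exact: lipV.
- rewrite /DVv /DV /FV /A /=; lia.
- exact: zV.
- exact: descV.
- by move=> [b [i hi]]; rewrite cardG; exact: bdV.
Qed.

Lemma cardW (P : pred (GPV n)) : #|[set w | P w]| = \sum_(i < n) (P (false, i) + P (true, i)).
Proof.
have -> : #|[set w | P w]| = \sum_(w : GPV n) P w.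
  rewrite -sum1_card big_mkcond; apply: eq_bigr => w _; rewrite inE; by case: (P w).
have -> : \sum_(w : GPV n) P w = \sum_(w : bool * 'I_n) P (w.1, w.2) by apply: eq_bigr; case.
rewrite -(pair_big xpredT xpredT (fun b i => (P (b, i) : nat))) /= big_bool /= -big_split /=.
by apply: eq_bigr => i _; rewrite addnC.
Qed.
End GPn.


Theorem proposition3p1 (n : nat) : 24 < n -> ~ dist_balanced (gp_adj n 4) 1.
Proof.
move=> hn H.
have h1 : gdist (gp_adj n 4) (u0 hn) (v0 hn) = 1.
  by rewrite (gV hn) /DVv /DV /FV /A /=; lia.
have := H _ _ h1; rewrite /Wset.
have -> : [set w | gdist (gp_adj n 4) w (u0 hn) < gdist (gp_adj n 4) w (v0 hn)]
        = [set w | DUv w < DVv w].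
  by apply/setP => w; rewrite !inE (gU hn) (gV hn).
have -> : [set w | gdist (gp_adj n 4) w (v0 hn) < gdist (gp_adj n 4) w (u0 hn)]
        = [set w | DVv w < DUv w].
  by apply/setP => w; rewrite !inE (gU hn) (gV hn).
rewrite !cardW /DUv /DVv /=.
have := @leq_sum _ (index_enum 'I_n) xpredT _ _ (fun i _ => pointwise hn (ltn_ord i)).
rewrite !big_split /= !big1_eq !sum_eq1; lia.
Qed.
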